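(* Let $m\ge 3$ and let $T_m$ be the graph defined below. Then the eigenvalues of $T_m$ (with multiplicity) are \[ \cos\tfrac{2\pi j}{m}+\cos\tfrac{2\pi \ell}{m}\pm\sqrt{\left(\cos\tfrac{2\pi j}{m}-\cos\tfrac{2\pi \ell}{m}\right)^2+1} \] for all $(j,\ell)\in\mathbb{Z}_m\times\mathbb{Z}_m$ (both signs).
   Context: For $m\ge3$, $T_m$ is the cubic graph on $2m^2$ vertices $\{x^+_{i,j},\,x^-_{i,j}\mid i,j\in\mathbb{Z}_m\}$ with edges $\{x^+_{i,j},x^+_{i,j+1}\}$, $\{x^-_{i,j},x^-_{i,j+1}\}$ and $\{x^+_{i,j},x^-_{j,i}\}$ for all $i,j\in\mathbb{Z}_m$. (It is the vertex truncation of the standard regular embedding of $K_{m,m}$.) Eigenvalues are those of the adjacency matrix. *)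

(* Defs.v *)
From HB Require Import structures.
From mathcomp Require Import all_boot all_order all_algebra.
From mathcomp Require Import all_classical all_reals all_analysis.
Set Implicit Arguments. Unset Strict Implicit. Unset Printing Implicit Defensive.
Import Order.TTheory GRing.Theory Num.Theory.

(* Vertices of T_m: (true,(i,j)) = x^+_{i,j}, (false,(i,j)) = x^-_{i,j}. *)
Definition Tm_vertex (m : nat) : finType := (bool * ('I_m * 'I_m))%type.

Definition Tm_adj (m : nat) (u v : Tm_vertex m) : bool :=
  let: (b, (i, j)) := u in
  let: (b', (i', j')) := v in
  [&& b == b', i == i' &
     ((nat_of_ord j' == (j.+1 %% m)%N) || (nat_of_ord j == (j'.+1 %% m)%N))]
  || [&& b != b', nat_of_ord i == nat_of_ord j' & nat_of_ord j == nat_of_ord i'].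

Definition Tm_adjmx (R : realType) (m : nat) : 'M[R]_#|Tm_vertex m| :=
  \matrix_(p, q) ((Tm_adj (enum_val p) (enum_val q))%:R)%R.

Local Open Scope ring_scope.
Definition Tm_c (R : realType) (m k : nat) : R := cos (2 * pi * k%:R / m%:R).

Definition Tm_ev (R : realType) (m j l : nat) (sgn : bool) : R :=
  Tm_c R m j + Tm_c R m l +
  (if sgn then 1 else -1) * Num.sqrt ((Tm_c R m j - Tm_c R m l) ^+ 2 + 1).

(* Main.v *)
Require Import Defs.
From HB Require Import structures.
From mathcomp Require Import all_boot all_order all_algebra.
From mathcomp Require Import all_classical all_reals all_analysis.
From mathcomp Require Import complex.
From mathcomp Require Import ring lra zify.
Import Order.TTheory GRing.Theory Num.Theory.
Local Open Scope ring_scope.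

Section Expo.
Variable R : realType.
Local Open Scope complex_scope.
Local Notation C := R[i].

Definition ee (x : R) : C := Complex (cos x) (sin x).

Lemma eeD x y : ee x * ee y = ee (x + y).
Proof.
rewrite /ee -[Complex _ _ * Complex _ _]/(Complex _ _) cosD sinD.
congr Complex; ring.
Qed.

Lemma ee0 : ee 0 = 1.
Proof. by rewrite /ee cos0 sin0. Qed.

Lemma eeX x k : ee x ^+ k = ee (k%:R * x).
Proof.
elim: k => [|k IH]; first by rewrite expr0 mul0r ee0.
rewrite exprS IH mulrC eeD; congr ee; rewrite -natr1; ring.
Qed.

Lemma eeN x : ee x * ee (- x) = 1.
Proof. by rewrite eeD subrr; apply: ee0. Qed.

Lemma cos_lt1 (y : R) : 0 < y < pi *+ 2 -> cos y < 1.
Proof.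
move=> /andP[y0 y2].
have -> : y = (y / 2) *+ 2 by rewrite -mulr_natr divfK // pnatr_eq0.
rewrite cos_mulr2n cos2sin2.
have : 0 < sin (y / 2).
  apply: sin_gt0_pi; apply/andP; split; first by rewrite divr_gt0.
  by rewrite ltr_pdivrMr // mulr_natr.
move=> h; have h2 : 0 < sin (y/2) ^+ 2 by rewrite exprn_gt0.
rewrite mulrnBl; move: h2; set s := sin _ ^+ 2 => h2; rewrite -mulr_natr; clear -h2; lra.
Qed.


Variable m : nat.
Hypothesis hm : (3 <= m)%N.

Lemma m0 : (m%:R : R) != 0.
Proof. by rewrite pnatr_eq0; case: m hm. Qed.

Definition omega : C := ee (2 * pi / m%:R).

Lemma omegaX (k : nat) : omega ^+ k = ee (2 * pi * k%:R / m%:R).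
Proof. by rewrite /omega eeX mulrC mulrAC. Qed.

Lemma omega_m : omega ^+ m = 1.
Proof.
rewrite omegaX -mulrA divff ?m0 // mulr1 /ee.
have -> : (2:R) * pi = pi *+ 2 by rewrite mulrC mulr_natr.
by rewrite cos2pi sin2pi.
Qed.

Lemma omega_neq1 k : (0 < k < m)%N -> omega ^+ k != 1.
Proof.
move=> /andP[k0 km]; rewrite omegaX /ee; apply/eqP => -[h _].
have : cos (2 * pi * k%:R / m%:R) < 1 :> R.
  apply: cos_lt1; apply/andP; split.
    by rewrite divr_gt0 ?mulr_gt0 ?pi_gt0 ?ltr0n //; case: (m) hm.
  rewrite ltr_pdivrMr ?ltr0n; last by case: (m) hm.
  have kmR : (k%:R : R) < m%:R by rewrite ltr_nat.
  have := pi_gt0 R; move: kmR; clear; set K := (k%:R : R); set M := (m%:R : R).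
  rewrite mulr_natr mulr2n; nra.
by rewrite h ltxx.
Qed.

Lemma omega_neq0 : omega != 0.
Proof.
apply/eqP => h; move: omega_m; rewrite h expr0n.
by case: (m) hm => // n _ /= /esym/eqP; rewrite oner_eq0.
Qed.

Lemma omega_inj a b : (a < m)%N -> (b < m)%N -> omega ^+ a = omega ^+ b -> a = b.
Proof.
wlog ab : a b / (a <= b)%N.
  move=> H am bm e; case: (leqP a b) => [|/ltnW] h; first exact: H.
  by apply/esym/H.
move=> am bm e; case: (ltnP a b) => [lt|]; last by move=> ba; apply/eqP; rewrite eqn_leq ab ba.
have ne : omega ^+ (b - a) != 1 by apply: omega_neq1; rewrite subn_gt0 lt /=; lia.
exfalso; move/negP: ne; apply; apply/eqP.
apply: (@mulfI _ (omega ^+ a)); first by rewrite expf_neq0 // omega_neq0.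
by rewrite -exprD subnKC // mulr1 e.
Qed.

Definition w : C := omega ^+ m.-1.

Lemma w_omega : w * omega = 1.
Proof. by rewrite /w -exprSr prednK ?omega_m //; case: (m) hm. Qed.

Lemma c_omega (k : nat) : omega ^+ k + w ^+ k = (2 * Tm_c R m k)%:C.
Proof.
have e1 : w ^+ k = ee (- (2 * pi * k%:R / m%:R)).
  apply: (@mulIf _ (omega ^+ k)); first by rewrite expf_neq0 // omega_neq0.
  by rewrite -exprMn w_omega expr1n omegaX mulrC eeN.
rewrite e1 omegaX /ee cosN sinN /Tm_c.
rewrite -[Complex _ _ + Complex _ _]/(Complex _ _) subrr; congr Complex.
by set x := cos _; ring.
Qed.

End Expo.

Section Mx.
Variable F : fieldType.
Variable T : finType.

Definition MX (g : T -> T -> F) : 'M[F]_#|T| :=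
  \matrix_(p, q) g (enum_val p) (enum_val q).

Lemma sum_ev (G : T -> F) : \sum_(j < #|T|) G (enum_val j) = \sum_y G y.
Proof.
by rewrite [RHS](reindex (@enum_val T T)) //; exists enum_rank => x _;
  rewrite ?enum_valK ?enum_rankK.
Qed.

Lemma prod_ev (G : T -> {poly F}) : \prod_(j < #|T|) G (enum_val j) = \prod_y G y.
Proof.
by rewrite [RHS](reindex (@enum_val T T)) //; exists enum_rank => x _;
  rewrite ?enum_valK ?enum_rankK.
Qed.

Lemma MX_mul g h : MX g *m MX h = MX (fun x z => \sum_y g x y * h y z).
Proof.
apply/matrixP => p q; rewrite !mxE -sum_ev.
by apply: eq_bigr => j _; rewrite !mxE.
Qed.

Lemma char_poly_sim n (A D V : 'M[F]_n) :
  \det V != 0 -> A *m V = V *m D -> char_poly A = char_poly D.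
Proof.
move=> dV AV.
have key : char_poly_mx A *m map_mx polyC V = map_mx polyC V *m char_poly_mx D.
  rewrite /char_poly_mx mulmxBl mulmxBr -!map_mxM AV scalar_mxC //.
have := congr1 determinant key; rewrite !det_mulmx det_map_mx.
rewrite [in RHS]mulrC; apply: mulIf; by rewrite polyC_eq0.
Qed.

End Mx.
Arguments MX {F T} g.
Arguments MX_mul {F T}.
Arguments prod_ev {F T}.
Arguments sum_ev {F T}.

Section Graph.
Variable R : realType.
Variable m : nat.
Hypothesis hm : (3 <= m)%N.
Local Notation C := R[i].
Local Notation T := (Tm_vertex m).
Local Open Scope complex_scope.

Lemma bigT3 (S : Type) (idx : S) (op : Monoid.com_law idx) (H : T -> S) :
  \big[op/idx]_x H x =
  \big[op/idx]_(b : bool) \big[op/idx]_(i < m) \big[op/idx]_(j < m) H (b, (i, j)).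
Proof.
transitivity (\big[op/idx]_(b : bool) \big[op/idx]_(p : 'I_m * 'I_m) H (b, p)).
  by rewrite (pair_big _ _ (fun b p => H (b, p))); apply: eq_big => // -[b p].
apply: eq_bigr => b _.
by rewrite (pair_big _ _ (fun i j => H (b, (i, j)))); apply: eq_big => // -[i j].
Qed.

Lemma m_pos : (0 < m)%N. Proof. by case: m hm. Qed.

Definition sc (j : 'I_m) : 'I_m := Ordinal (ltn_pmod j.+1 m_pos).
Definition pc (j : 'I_m) : 'I_m := Ordinal (ltn_pmod (j + m.-1) m_pos).

Arguments sc : simpl never.
Arguments pc : simpl never.

Definition n1 (x : T) : T := (x.1, (x.2.1, sc x.2.2)).
Definition n2 (x : T) : T := (x.1, (x.2.1, pc x.2.2)).
Definition n3 (x : T) : T := (~~ x.1, (x.2.2, x.2.1)).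

Lemma pred_eq (j j' : 'I_m) :
  (nat_of_ord j == j'.+1 %% m)%N = (nat_of_ord j' == (j + m.-1) %% m)%N.
Proof.
apply/eqP/eqP => ->.
  rewrite modnDml addSn -addnS prednK ?m_pos // modnDr modn_small //.
rewrite -addn1 modnDml -addnA addn1 prednK ?m_pos // modnDr modn_small //.
Qed.

Lemma adjE x y : Tm_adj x y = [|| y == n1 x, y == n2 x | y == n3 x].
Proof.
case: x => b [i j]; case: y => b' [i' j'].
rewrite /Tm_adj /n1 /n2 /n3 /= !xpair_eqE (pred_eq j j').
rewrite -!val_eqE /sc /pc /=.
case: b; case: b' => /=; rewrite ?orbF;
  first [by rewrite andb_orr [in RHS]eq_sym | by rewrite andbC; congr (_ && _); apply: eq_sym].
Qed.


Lemma sc_val (j : 'I_m) : nat_of_ord (sc j) = if j.+1 == m then 0%N else j.+1.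
Proof.
rewrite /sc /=; case: eqP => [->|ne]; first by rewrite modnn.
by rewrite modn_small //; have := ltn_ord j; lia.
Qed.

Lemma pc_val (j : 'I_m) : nat_of_ord (pc j) = if nat_of_ord j == 0%N then m.-1 else j.-1.
Proof.
rewrite /pc /=; case: eqP => [->|ne]; first by rewrite add0n modn_small // prednK ?m_pos.
have -> : (j + m.-1 = j.-1 + m)%N by have := m_pos; lia.
by rewrite modnDr modn_small //; have := ltn_ord j; lia.
Qed.

Lemma n12 x : n1 x != n2 x.
Proof.
case: x => b [i j]; rewrite /n1 /n2 /= !xpair_eqE !eqxx /=.
apply/negP => /eqP /(congr1 (@nat_of_ord m)); rewrite sc_val pc_val.
by have := ltn_ord j; have := hm; case: eqP; case: eqP => /= *; lia.
Qed.

Lemma adjR x y :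
  (Tm_adj x y)%:R = (y == n1 x)%:R + (y == n2 x)%:R + (y == n3 x)%:R :> C.
Proof.
rewrite adjE.
have d13 : n1 x != n3 x by rewrite /n1 /n3 !xpair_eqE; case: (x.1).
have d23 : n2 x != n3 x by rewrite /n2 /n3 !xpair_eqE; case: (x.1).
case: (eqVneq y (n1 x)) => [e|h1].
  by subst y; rewrite (negbTE (n12 x)) (negbTE d13) /= !addr0.
case: (eqVneq y (n2 x)) => [e|h2].
  by subst y; rewrite (negbTE d23) /= add0r addr0.
by case: (eqVneq y (n3 x)) => [e|h3] /=; rewrite !add0r.
Qed.

Lemma sum_ind (G : T -> C) n : \sum_y (y == n)%:R * G y = G n.
Proof.
rewrite (bigD1 n) //= eqxx mul1r big1 ?addr0 // => y /negbTE ->.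
by rewrite mul0r.
Qed.


Local Notation om := (omega R m).
Local Notation ww := (w R m).
Let om_m := @omega_m R m hm.
Let c_om := @c_omega R m hm.

Definition lam (u : T) : R := Tm_ev R m u.2.1 u.2.2 u.1.
Definition beta (u : T) : R := lam u - 2 * Tm_c R m u.2.2.

Arguments lam : simpl never.
Arguments beta : simpl never.

Lemma sqrtE (x y : R) : Num.sqrt ((x - y) ^+ 2 + 1) ^+ 2 = (x - y) ^+ 2 + 1.
Proof. by rewrite sqr_sqrtr // addr_ge0 // sqr_ge0. Qed.

Lemma beta_eq1 u : (lam u - 2 * Tm_c R m u.2.1) * beta u = 1.
Proof.
case: u => s [a b]; rewrite /beta /lam /Tm_ev /=.
move: (sqrtE (Tm_c R m a) (Tm_c R m b)).
set x := Tm_c R m a; set y := Tm_c R m b; set S := Num.sqrt _ => hS.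
case: s; rewrite ?mul1r ?mulN1r; nra.
Qed.

Lemma beta_prod (a b : 'I_m) : beta (true, (a, b)) * beta (false, (a, b)) = -1.
Proof.
rewrite /beta /lam /Tm_ev /=.
move: (sqrtE (Tm_c R m a) (Tm_c R m b)).
set x := Tm_c R m a; set y := Tm_c R m b; set S := Num.sqrt _ => hS.
rewrite ?mul1r ?mulN1r; nra.
Qed.

Lemma lam_beta u : lam u = 2 * Tm_c R m u.2.2 + beta u.
Proof. by rewrite /beta addrCA subrr addr0. Qed.

Lemma lam_beta2 u : lam u * beta u = 2 * Tm_c R m u.2.1 * beta u + 1.
Proof. have := beta_eq1 u; rewrite mulrBl; lra. Qed.

Definition Vf (x u : T) : C :=
  if x.1 then (om ^+ u.2.1) ^+ x.2.1 * (om ^+ u.2.2) ^+ x.2.2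
  else (beta u)%:C * ((om ^+ u.2.2) ^+ x.2.1 * (om ^+ u.2.1) ^+ x.2.2).

Definition Uf (u x : T) : C :=
  if x.1 then (ww ^+ u.2.1) ^+ x.2.1 * (ww ^+ u.2.2) ^+ x.2.2
  else (beta u)%:C * ((ww ^+ u.2.2) ^+ x.2.1 * (ww ^+ u.2.1) ^+ x.2.2).

Definition Af (x y : T) : C := (Tm_adj x y)%:R.

Lemma om_sc k (j : 'I_m) : (om ^+ k) ^+ (sc j) = (om ^+ k) ^+ j * om ^+ k.
Proof.
rewrite /sc /= expr_mod; first by rewrite exprS mulrC.
by rewrite exprAC om_m expr1n.
Qed.

Lemma om_pc k (j : 'I_m) : (om ^+ k) ^+ (pc j) = (om ^+ k) ^+ j * ww ^+ k.
Proof.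
rewrite /pc /= expr_mod; first by rewrite exprD /w; congr (_ * _); exact: exprAC.
by rewrite exprAC om_m expr1n.
Qed.

Lemma eigen x u : \sum_y Af x y * Vf y u = Vf x u * (lam u)%:C.
Proof.
rewrite /Af; under eq_bigr do rewrite adjR !mulrDl.
rewrite !big_split /= !sum_ind.
case: x => b [i j]; case: u => s [a c].
rewrite /Vf /n1 /n2 /n3 /=; case: b => /=.
  set B := (beta (s, (a, c)))%:C.
  rewrite om_sc om_pc [in RHS](lam_beta (s, (a, c))) [in RHS]rmorphD /= -/B -c_om.
  set X := (om ^+ a) ^+ i; set Y := (om ^+ c) ^+ j.
  ring.
rewrite om_sc om_pc.
have E : (lam (s, (a, c)))%:C * (beta (s, (a, c)))%:C =
  (beta (s, (a, c)))%:C * (om ^+ a + ww ^+ a) + 1.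
  by rewrite c_om -!rmorphM -rmorphD /= lam_beta2 mulrC mulrA.
set X := (om ^+ a) ^+ j; set Y := (om ^+ c) ^+ i.
transitivity (Y * X * ((beta (s, (a, c)))%:C * (om ^+ a + ww ^+ a) + 1)); first ring.
rewrite -E; ring.
Qed.


Definition G (a a' : nat) : C := \sum_(i < m) (ww ^+ a * om ^+ a') ^+ i.

Lemma ww_m : ww ^+ m = 1.
Proof. by rewrite /w exprAC om_m expr1n. Qed.

Lemma G_eq (a a' : 'I_m) : G a a' = if a == a' then m%:R else 0.
Proof.
case: eqVneq => [<-|ne].
  rewrite /G -exprMn (@w_omega R m hm) expr1n.
  by under eq_bigr do rewrite expr1n; rewrite sumr_const card_ord.
set z := ww ^+ a * om ^+ a'.
have zm : z ^+ m = 1 by rewrite /z exprMn exprAC ww_m expr1n exprAC om_m expr1n mulr1.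
have z1 : z != 1.
  apply/eqP => h.
  have : om ^+ a * z = om ^+ a'.
    by rewrite /z mulrA -exprMn [om * _]mulrC (@w_omega R m hm) expr1n mul1r.
  rewrite h mulr1 => /(@omega_inj R m hm _ _ (ltn_ord a) (ltn_ord a')) e.
  by move: ne; rewrite -val_eqE /= e eqxx.
have := subrX1 z m; rewrite zm subrr => /esym/eqP.
by rewrite mulf_eq0 subr_eq0 (negbTE z1) /= => /eqP.
Qed.

Definition dd (u : T) : C := m%:R ^+ 2 * (1 + beta u ^+ 2)%:C.

Lemma ortho u u' : \sum_x Uf u x * Vf x u' = if u == u' then dd u else 0.
Proof.
case: u => s [a b]; case: u' => s' [a' b'].
have -> : \sum_x Uf (s, (a, b)) x * Vf x (s', (a', b')) =
   G a a' * G b b' * (1 + (beta (s, (a, b)) * beta (s', (a', b')))%:C).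
  rewrite bigT3 big_bool /= mulrDr mulr1; congr (_ + _).
    rewrite /G big_distrl; apply: eq_bigr => i _ /=; rewrite big_distrr.
    apply: eq_bigr => j _ /=; rewrite /Uf /Vf /= !exprMn; ring.
  rewrite rmorphM /=.
  set B := (beta _)%:C; set B' := (beta _)%:C.
  transitivity (B * B' * (G b b' * G a a')); last ring.
  rewrite /G big_distrl /= big_distrr /=; apply: eq_bigr => i _.
  rewrite big_distrr /= big_distrr /=; apply: eq_bigr => j _.
  rewrite /Uf /Vf /= !exprMn -/B -/B'; ring.
rewrite !G_eq !xpair_eqE.
case: (eqVneq a a') => [<-|na]; last by rewrite !mul0r /= andbF.
case: (eqVneq b b') => [<-|nb]; last by rewrite mulr0 !mul0r /= andbF.
rewrite /= !andbT /dd.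
case: s; case: s' => /=.
- by rewrite !expr2 rmorphD rmorph1.
- by rewrite beta_prod rmorphN rmorph1 subrr mulr0.
- by rewrite [beta _ * _]mulrC beta_prod rmorphN rmorph1 subrr mulr0.
- by rewrite !expr2 rmorphD rmorph1.
Qed.


Lemma dd_neq0 u : dd u != 0.
Proof.
rewrite /dd mulf_neq0 //; first by rewrite expf_neq0 // pnatr_eq0 -lt0n m_pos.
apply/eqP => h.
have : (1 + beta u ^+ 2) = 0.
  by apply: (@complexI R); rewrite h.
have := sqr_ge0 (beta u); move: (beta u ^+ 2) => t; lra.
Qed.

Lemma main_C :
  char_poly (MX Af) = \prod_(u : T) ('X - ((lam u)%:C)%:P).
Proof.
rewrite (@char_poly_sim _ _ _ (diag_mx (\row_p (lam (enum_val p))%:C)) (MX Vf)).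
- rewrite char_poly_trig ?diag_mx_is_trig //.
  rewrite (eq_bigr (fun i => 'X - ((lam (enum_val i))%:C)%:P)); last first.
    by move=> i _; rewrite /diag_mx !mxE eqxx mulr1n.
  by rewrite (prod_ev (fun u => 'X - ((lam u)%:C)%:P)).
- have UV : MX Uf *m MX Vf = diag_mx (\row_p dd (enum_val p)).
    apply/matrixP => p q; rewrite MX_mul /diag_mx !mxE ortho (inj_eq enum_val_inj).
    by case: eqP => [->|]; rewrite ?mulr1n ?mulr0n.
  have := congr1 determinant UV; rewrite det_mulmx det_diag => h.
  apply/eqP => h0; move: h; rewrite h0 mulr0 => /esym/eqP; apply/negP.
  by apply/prodf_neq0 => i _; rewrite mxE dd_neq0.
- rewrite MX_mul mul_mx_diag; apply/matrixP => p q; by rewrite !mxE eigen.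
Qed.

End Graph.

Theorem theorem6p9 (R : realType) (m : nat) (hm : (3 <= m)%N) :
  char_poly (Tm_adjmx R m) =
  \prod_(j < m) \prod_(l < m) \prod_(s : bool) ('X - (Tm_ev R m j l s)%:P).
Proof.
have -> : \prod_(j < m) \prod_(l < m) \prod_(s : bool) ('X - (Tm_ev R m j l s)%:P)
    = \prod_(u : Tm_vertex m) ('X - (lam R m u)%:P).
  rewrite bigT3 [RHS]exchange_big /=; apply: eq_bigr => a _.
  by rewrite [RHS]exchange_big.
apply: (@map_poly_inj _ _ (real_complex R)).
rewrite map_char_poly map_prod_XsubC.
rewrite -(@main_C R m hm); congr char_poly.
by apply/matrixP => p q; rewrite !mxE rmorph_nat.
Qed.
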